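(* Let $\epsilon\in\{1,-1\}$. Let $X,Y,Z\in\mathbb{Z}[i]$ satisfy $X^2+Y^2=\epsilon iZ^2$, $\gcd(X,Y,Z)\in U$, $XYZ\neq0$, where $X,Y\in O^I$ and $Z=(1+i)W$ with $W\in O^I$. Then there exist an integer $t$, $0\le t\le 3$, and $P,Q\in G$, both not divisible by $1+i$, with $\gcd(P,Q)=1$, such that $$X=i^{t+1}\frac{P^2+\epsilon(-1)^t iQ^2}{1+i},\quad Y=i^t\frac{P^2-\epsilon(-1)^t iQ^2}{1+i},\quad Z=(1+i)PQ.$$
   Context: $\mathbb{Z}[i]$ is the ring of Gaussian integers, $U=\{1,-1,i,-i\}$ its unit group; $R(\alpha),I(\alpha)$ are real and imaginary parts. $\gcd(\cdot)\in U$ means no common non-unit divisor; for $P,Q\in G$, $\gcd(P,Q)=1$ means no common prime factor. $O=\{\alpha: R(\alpha)+I(\alpha)\equiv1\pmod 2\}$, $O^I=\{\alpha\in O: R(\alpha)\equiv 1\pmod 4\}$. $G$ is the set of Gaussian integers $(1+i)^{a_1}p_2^{a_2}\cdots p_m^{a_m}$ with integers $a_j\ge0$ and $p_j$ distinct Gaussian primes in $O^I$. *)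

(* Defs.v *)
From Stdlib Require Import ZArith List.
Open Scope Z_scope.

Record GI := mkGI { re : Z ; im : Z }.

Definition gadd (a b : GI) : GI := mkGI (re a + re b) (im a + im b).
Definition gopp (a : GI) : GI := mkGI (- re a) (- im a).
Definition gmul (a b : GI) : GI :=
  mkGI (re a * re b - im a * im b) (re a * im b + im a * re b).
Definition gsub (a b : GI) : GI := gadd a (gopp b).
Definition gzero : GI := mkGI 0 0.
Definition gone : GI := mkGI 1 0.
Definition gi : GI := mkGI 0 1.
Definition gofZ (z : Z) : GI := mkGI z 0.
Fixpoint gpow (a : GI) (n : nat) : GI :=
  match n with O => gone | S k => gmul a (gpow a k) end.

Definition oneplusi : GI := mkGI 1 1.

Definition gdiv (d a : GI) : Prop := exists c, a = gmul d c.

Definition inU (u : GI) : Prop :=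
  u = gone \/ u = gopp gone \/ u = gi \/ u = gopp gi.

Definition gprime (p : GI) : Prop :=
  p <> gzero /\ ~ inU p /\
  forall a b, p = gmul a b -> inU a \/ inU b.

Definition inO (a : GI) : Prop := Z.odd (re a + im a) = true.
Definition inOI (a : GI) : Prop := inO a /\ re a mod 4 = 1.

Fixpoint prod_pows (l : list (GI * nat)) : GI :=
  match l with
  | nil => gone
  | (p, k) :: l' => gmul (gpow p k) (prod_pows l')
  end.

Definition inG (x : GI) : Prop :=
  exists (a1 : nat) (l : list (GI * nat)),
    NoDup (map fst l) /\
    (forall p k, In (p, k) l -> gprime p /\ inOI p) /\
    x = gmul (gpow oneplusi a1) (prod_pows l).

Definition gcd3_unit (x y z : GI) : Prop :=
  forall d, gdiv d x -> gdiv d y -> gdiv d z -> inU d.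

(* gcd(P,Q) = 1 for P,Q in G: no common prime factor *)
Definition no_common_prime (p q : GI) : Prop :=
  forall r, gprime r -> gdiv r p -> gdiv r q -> False.

(* Main.v *)
Require Import Defs.
From Stdlib Require Import ZArith List Lia Ring Classical.
Open Scope Z_scope.

Lemma GI_ext (a b : GI) : re a = re b -> im a = im b -> a = b.
Proof. destruct a, b; simpl; intros; subst; reflexivity. Qed.

Ltac gcomp := repeat match goal with x : GI |- _ => destruct x end;
  unfold gsub, gadd, gopp, gmul, gzero, gone, gi, gofZ, oneplusi in *; cbn [re im] in *;
  f_equal; ring.

Lemma GI_ring : ring_theory gzero gone gadd gmul gsub gopp (@eq GI).
Proof. constructor; intros; gcomp. Qed.
Add Ring GIring : GI_ring.

Definition gN (a : GI) := re a * re a + im a * im a.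

Lemma gN_mul a b : gN (gmul a b) = gN a * gN b.
Proof. destruct a, b; unfold gN, gmul; simpl; ring. Qed.
Lemma gN_nonneg a : 0 <= gN a.
Proof. destruct a; unfold gN; simpl; nia. Qed.
Lemma gN_zero a : gN a = 0 -> a = gzero.
Proof. destruct a as [x y]; unfold gN, gzero; simpl; intro H.
  assert (x = 0) by nia. assert (y = 0) by nia. subst; reflexivity. Qed.
Lemma gN_pos a : a <> gzero -> 0 < gN a.
Proof. intro H. pose proof (gN_nonneg a). destruct (Z.eq_dec (gN a) 0).
  - exfalso; apply H, gN_zero; auto. - lia. Qed.

Lemma gmul_eq0 a b : gmul a b = gzero -> a = gzero \/ b = gzero.
Proof. intro H. assert (gN a * gN b = 0) by (rewrite <- gN_mul, H; reflexivity).
  apply Z.mul_eq_0 in H0. destruct H0; [left|right]; apply gN_zero; auto. Qed.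

Lemma gcancel a b c : a <> gzero -> gmul a b = gmul a c -> b = c.
Proof. intros Ha H. assert (E : gsub (gmul a b) (gmul a c) = gzero) by (rewrite H; ring).
  assert (gmul a (gsub b c) = gzero) by (rewrite <- E; ring).
  apply gmul_eq0 in H0. destruct H0; [contradiction|].
  assert (b = gadd (gsub b c) c) by ring. rewrite H1, H0; ring. Qed.

Lemma gdiv_refl a : gdiv a a. Proof. exists gone; ring. Qed.
Lemma gdiv_trans a b c : gdiv a b -> gdiv b c -> gdiv a c.
Proof. intros [x Hx] [y Hy]; exists (gmul x y); subst; ring. Qed.
Lemma gdiv_mulr a b x : gdiv a b -> gdiv a (gmul b x).
Proof. intros [y Hy]; exists (gmul y x); subst; ring. Qed.
Lemma gdiv_mull a b x : gdiv a b -> gdiv a (gmul x b).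
Proof. intros [y Hy]; exists (gmul y x); subst; ring. Qed.
Lemma gdiv_lin d a b x y : gdiv d a -> gdiv d b -> gdiv d (gadd (gmul a x) (gmul b y)).
Proof. intros [u Hu] [v Hv]; exists (gadd (gmul u x) (gmul v y)); subst; ring. Qed.
Lemma gdiv_add d a b : gdiv d a -> gdiv d b -> gdiv d (gadd a b).
Proof. intros [u Hu] [v Hv]; exists (gadd u v); subst; ring. Qed.
Lemma gdiv_sub d a b : gdiv d a -> gdiv d b -> gdiv d (gsub a b).
Proof. intros [u Hu] [v Hv]; exists (gsub u v); subst; ring. Qed.

Lemma N1_unit a : gN a = 1 -> inU a.
Proof. destruct a as [x y]; unfold gN; simpl; intro H.
  assert (x = 0 \/ x = 1 \/ x = -1) by nia.
  unfold inU, gone, gopp, gi; simpl.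
  destruct H0 as [-> | [-> | ->]].
  - assert (y = 1 \/ y = -1) by nia. destruct H0 as [-> | ->]; auto.
  - assert (y = 0) by nia; subst; auto.
  - assert (y = 0) by nia; subst; auto.
Qed.
Lemma unit_of_mul a b : gmul a b = gone -> inU a.
Proof. intro H. assert (gN a * gN b = 1) by (rewrite <- gN_mul, H; reflexivity).
  pose proof (gN_nonneg a); pose proof (gN_nonneg b). apply N1_unit.
  apply (Z.eq_mul_1_nonneg _ _ H1 H0). Qed.
Lemma inU_inv u : inU u -> exists v, gmul u v = gone.
Proof. intros [->|[-> | [-> | ->]]]; [exists gone|exists (gopp gone)|exists (gopp gi)|exists gi];
  vm_compute; reflexivity. Qed.
Lemma inU_mul a b : inU a -> inU b -> inU (gmul a b).
Proof. intros Ha Hb. destruct (inU_inv a Ha) as [a' Ha'], (inU_inv b Hb) as [b' Hb'].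
  apply (unit_of_mul _ (gmul a' b')).
  transitivity (gmul (gmul a a') (gmul b b')); [ring | rewrite Ha', Hb'; ring]. Qed.
Lemma inU_nz u : inU u -> u <> gzero.
Proof. intros [->|[-> | [-> | ->]]]; discriminate. Qed.
Lemma gdiv_one_unit d : gdiv d gone -> inU d.
Proof. intros [c Hc]. apply (unit_of_mul d c); auto. Qed.
Lemma unit_gdiv u a : inU u -> gdiv u a.
Proof. intro H. destruct (inU_inv u H) as [v Hv]. exists (gmul v a).
  transitivity (gmul (gmul u v) a); [rewrite Hv; ring | ring]. Qed.
Lemma unit_pow u : inU u -> exists t, (t <= 3)%nat /\ u = gpow gi t.
Proof. intros [->|[-> | [-> | ->]]]; [exists 0%nat|exists 2%nat|exists 1%nat|exists 3%nat];
  split; try lia; vm_compute; reflexivity. Qed.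
Lemma round_div (p n : Z) : 0 < n -> exists q, -n <= 2*(p - q*n) <= n.
Proof. intro Hn. exists ((2*p + n) / (2*n)).
  pose proof (Z.div_mod (2*p+n) (2*n) ltac:(lia)).
  pose proof (Z.mod_pos_bound (2*p+n) (2*n) ltac:(lia)). lia. Qed.

Lemma gdivmod a b : b <> gzero -> exists q r, a = gadd (gmul b q) r /\ gN r < gN b.
Proof. intro Hb. pose proof (gN_pos b Hb) as Hn.
  destruct a as [a1 a2], b as [b1 b2]. unfold gN in *; cbn [re im] in *.
  set (n := b1*b1+b2*b2) in *.
  destruct (round_div (a1*b1 + a2*b2) n Hn) as [q1 H1].
  destruct (round_div (a2*b1 - a1*b2) n Hn) as [q2 H2].
  set (q := mkGI q1 q2). set (r := gsub (mkGI a1 a2) (gmul (mkGI b1 b2) q)).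
  exists q, r. split. { unfold r; ring. }
  assert (E : gN r * n = (a1*b1 + a2*b2 - q1*n)^2 + (a2*b1 - a1*b2 - q2*n)^2).
  { unfold r, q, n, gN, gsub, gadd, gopp, gmul; cbn [re im]. ring. }
  unfold gN in E |- *. set (R := re r * re r + im r * im r) in *.
  set (e1 := a1*b1 + a2*b2 - q1*n) in *. set (e2 := a2*b1 - a1*b2 - q2*n) in *.
  assert (4 * (e1^2) <= n*n) by nia. assert (4*(e2^2) <= n*n) by nia.
  assert (4 * R * n <= 2 * n * n) by nia. nia. Qed.

Lemma bezout_aux (m : nat) : forall a b, (Z.to_nat (gN b) <= m)%nat ->
  exists g x y, g = gadd (gmul a x) (gmul b y) /\ gdiv g a /\ gdiv g b.
Proof. induction m as [|m IH]; intros a b Hm.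
  - assert (gN b = 0) by (pose proof (gN_nonneg b); lia). apply gN_zero in H; subst.
    exists a, gone, gzero. split; [ring|]. split; [apply gdiv_refl| exists gzero; ring].
  - destruct (classic (b = gzero)) as [Hb|Hb].
    + subst. exists a, gone, gzero. split; [ring|]. split; [apply gdiv_refl| exists gzero; ring].
    + destruct (gdivmod a b Hb) as [q [r [Hq Hr]]].
      pose proof (gN_nonneg r).
      destruct (IH b r ltac:(lia)) as [g [x [y [Hg [Hgb Hgr]]]]].
      exists g, y, (gsub x (gmul q y)). split.
      * rewrite Hg. assert (r = gsub a (gmul b q)) by (rewrite Hq; ring). rewrite H0; ring.
      * split; [|auto]. rewrite Hq. apply gdiv_add; [apply gdiv_mulr|]; auto.
Qed.

Lemma bezout a b : exists g x y, g = gadd (gmul a x) (gmul b y) /\ gdiv g a /\ gdiv g b.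
Proof. apply (bezout_aux (Z.to_nat (gN b))). lia. Qed.

Lemma div1pi_notO a : gdiv oneplusi a -> ~ inO a.
Proof. intros [c ->]. unfold inO. destruct c as [c1 c2]; unfold gmul, oneplusi; cbn [re im].
  replace (1 * c1 - 1 * c2 + (1 * c2 + 1 * c1)) with (2*c1) by ring.
  rewrite Z.odd_mul; simpl; discriminate. Qed.

Lemma odd_ex n : Z.odd n = true -> exists k, n = 2*k+1.
Proof. intro H. apply Z.odd_spec in H. destruct H as [k Hk]; exists k; lia. Qed.
Lemma even_ex n : Z.odd n = false -> exists k, n = 2*k.
Proof. intro H. pose proof (Zmod_odd n). rewrite H in H0.
  pose proof (Z.div_mod n 2 ltac:(lia)). exists (n/2); lia. Qed.
Lemma ex_odd n k : n = 2*k+1 -> Z.odd n = true.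
Proof. intros ->. apply Z.odd_spec. exists k; lia. Qed.
Lemma mod4_ex n : n mod 4 = 1 -> exists k, n = 4*k+1.
Proof. intro H. pose proof (Z.div_mod n 4 ltac:(lia)). exists (n/4); lia. Qed.
Lemma ex_mod4 n k : n = 4*k+1 -> n mod 4 = 1.
Proof. intro H. symmetry. apply (Z.mod_unique n 4 k 1); lia. Qed.

Lemma notO_div1pi a : ~ inO a -> gdiv oneplusi a.
Proof. unfold inO. intro H. destruct a as [a1 a2]; cbn [re im] in *.
  destruct (Z.odd (a1 + a2)) eqn:E; [congruence|]. apply even_ex in E as [k Hk].
  exists (mkGI k (k - a1)). unfold gmul, oneplusi; cbn [re im]. f_equal; lia. Qed.

Lemma inO_dec a : inO a \/ gdiv oneplusi a.
Proof. destruct (classic (inO a)); [left|right]; auto using notO_div1pi. Qed.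

Lemma inO_nz a : inO a -> a <> gzero.
Proof. intros H ->. discriminate. Qed.

Lemma sq1pi : gmul oneplusi oneplusi = gmul (gofZ 2) gi.
Proof. vm_compute. reflexivity. Qed.

Lemma odd_div2 d a : ~ gdiv oneplusi d -> gdiv d (gmul (gofZ 2) a) -> gdiv d a.
Proof. intros Hd H2.
  destruct (bezout d oneplusi) as [g [x [y [Hg [Hgd Hg1]]]]].
  assert (Hu : inU g).
  { destruct Hg1 as [c Hc].
    assert (gN g * gN c = 2) by (rewrite <- gN_mul, <- Hc; reflexivity).
    pose proof (gN_nonneg g); pose proof (gN_nonneg c).
    assert (gN g = 1 \/ gN c = 1) by nia. destruct H3.
    - apply N1_unit; auto.
    - exfalso. apply Hd. apply N1_unit in H3. destruct (inU_inv c H3) as [c' Hc'].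
      apply (gdiv_trans _ g); auto. exists c'.
      transitivity (gmul g (gmul c c')); [rewrite Hc'; ring | rewrite Hc; ring]. }
  destruct (inU_inv g Hu) as [gv Hgv].
  set (s := gmul x gv). set (y' := gmul y gv).
  assert (E1 : gone = gadd (gmul d s) (gmul oneplusi y')).
  { rewrite <- Hgv, Hg. unfold s, y'; ring. }
  set (K := gmul (gmul s a) (gadd (gmul d s) (gadd (gmul oneplusi y') (gmul oneplusi y')))).
  assert (E2 : a = gadd (gmul d K) (gmul (gmul (gmul oneplusi oneplusi) a) (gmul y' y'))).
  { transitivity (gmul a (gmul gone gone)); [ring|]. rewrite E1. unfold K; ring. }
  rewrite sq1pi in E2.
  rewrite E2. apply gdiv_add; [apply gdiv_mulr, gdiv_refl|].
  replace (gmul (gmul (gmul (gofZ 2) gi) a) (gmul y' y')) with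
    (gmul (gmul (gofZ 2) a) (gmul gi (gmul y' y'))) by ring.
  apply gdiv_mulr; auto.
Qed.

Ltac gconc := unfold gmul, gopp, gone, gi, gadd, gsub, gzero, oneplusi, gofZ; cbn [re im]; f_equal; ring.

Lemma OI_norm g : inO g -> exists v P, inU v /\ inOI P /\ g = gmul v P.
Proof. destruct g as [a b]. unfold inO, inOI, inO; cbn [re im]. intro H.
  apply odd_ex in H as [k Hk].
  pose proof (Z.div_mod a 4 ltac:(lia)). pose proof (Z.mod_pos_bound a 4 ltac:(lia)).
  set (r := a mod 4) in *. set (q := a / 4) in *.
  assert (r = 0 \/ r = 1 \/ r = 2 \/ r = 3) as Hr by lia.
  destruct Hr as [Hr|[Hr|[Hr|Hr]]].
  2: { exists gone, (mkGI a b). unfold inU. split; [auto|]. split; [cbn [re im]; split; [apply (ex_odd _ k); lia | apply (ex_mod4 _ q); lia]| gconc]. }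
  3: { exists (gopp gone), (mkGI (-a) (-b)). unfold inU. split; [auto|]. split; [cbn [re im]; split; [apply (ex_odd _ (-k-1)); lia | apply (ex_mod4 _ (-q-1)); lia]| gconc]. }
  all: pose proof (Z.div_mod b 4 ltac:(lia)); pose proof (Z.mod_pos_bound b 4 ltac:(lia));
    set (r' := b mod 4) in *; set (q' := b / 4) in *;
    assert (r' = 1 \/ r' = 3) as Hr' by lia;
    (destruct Hr' as [Hr'|Hr'];
    [ exists gi, (mkGI b (-a)); unfold inU; split; [auto|]; split; [cbn [re im]; split; [apply (ex_odd _ (k - a)); lia | apply (ex_mod4 _ q'); lia]| gconc]
    | exists (gopp gi), (mkGI (-b) a); unfold inU; split; [auto|]; split; [cbn [re im]; split; [apply (ex_odd _ (a-k-1)); lia | apply (ex_mod4 _ (-q'-1)); lia]| gconc]]).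
Qed.

Lemma OI_quot P W Q : inOI P -> inOI W -> W = gmul P Q -> inOI Q.
Proof. intros HP HW HE.
  assert (HQ : inO Q).
  { destruct (inO_dec Q) as [|Hd]; auto. exfalso. apply (div1pi_notO W); [|apply HW].
    rewrite HE. apply gdiv_mull; auto. }
  destruct P as [p1 p2], Q as [q1 q2], W as [w1 w2].
  unfold inOI, inO in *; cbn [re im] in *. destruct HP as [HP1 HP2], HW as [HW1 HW2].
  apply odd_ex in HP1 as [b Hb], HW1 as [f Hf], HQ as [d Hd].
  apply mod4_ex in HP2 as [a Ha], HW2 as [c Hc].
  unfold gmul in HE; cbn [re im] in HE. injection HE as E1 E2.
  split. { apply (ex_odd _ d); lia. }
  set (e := b - 2*a). assert (p2 = 2*e) by (unfold e; lia).
  set (h := f - 2*c - 2*a*q2 - e*q1). assert (q2 = 2*h) by (unfold h; nia).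
  apply (ex_mod4 _ (c - a*q1 + e*h)). nia.
Qed.

Lemma OI_unit u : inOI u -> inU u -> u = gone.
Proof. intros H [-> | [-> | [-> | ->]]]; auto; destruct H as [_ H]; vm_compute in H; discriminate. Qed.

Lemma exists_prime_div (m : nat) : forall a, (Z.to_nat (gN a) <= m)%nat -> a <> gzero -> ~ inU a ->
  exists r, gprime r /\ gdiv r a.
Proof. induction m as [|m IH]; intros a Hm Ha Hu.
  - pose proof (gN_pos a Ha). lia.
  - destruct (classic (gprime a)) as [Hp|Hp].
    + exists a. split; auto. apply gdiv_refl.
    + assert (exists b c, a = gmul b c /\ ~ inU b /\ ~ inU c) as [b [c [Hbc [Hb Hc]]]].
      { apply NNPP. intro Hn. apply Hp. split; [auto|split; [auto|]].
        intros b c Hbc. apply NNPP. intro H. apply Hn. exists b, c. split; auto. }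
      assert (Hb0 : b <> gzero) by (intros ->; apply Ha; rewrite Hbc; ring).
      assert (Hc0 : c <> gzero) by (intros ->; apply Ha; rewrite Hbc; ring).
      pose proof (gN_pos b Hb0). pose proof (gN_pos c Hc0).
      assert (gN c <> 1) by (intro E; apply Hc, N1_unit, E).
      assert (gN a = gN b * gN c) by (rewrite Hbc; apply gN_mul).
      destruct (IH b ltac:(nia) Hb0 Hb) as [r [Hr Hrb]].
      exists r. split; auto. rewrite Hbc. apply gdiv_mulr; auto.
Qed.

Lemma gprime_assoc r v r' : gprime r -> inU v -> r = gmul v r' -> gprime r'.
Proof. intros [H0 [H1 H2]] Hv E. destruct (inU_inv v Hv) as [v' Hv'].
  split; [|split].
  - intros ->. apply H0. rewrite E; ring.
  - intro Hu. apply H1. rewrite E. apply inU_mul; auto.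
  - intros a b Hab. destruct (H2 (gmul v a) b) as [Ha|Hb].
    + rewrite E, Hab; ring.
    + left. replace a with (gmul v' (gmul v a)).
      * apply inU_mul; auto. apply (unit_of_mul v' v). rewrite <- Hv'; ring.
      * transitivity (gmul (gmul v v') a); [ring| rewrite Hv'; ring].
    + right; auto.
Qed.

Definition GI_eq_dec (a b : GI) : {a = b} + {a <> b}.
Proof. decide equality; apply Z.eq_dec. Defined.

Fixpoint ins (p : GI) (l : list (GI * nat)) : list (GI * nat) :=
  match l with
  | nil => (p, 1%nat) :: nil
  | (q, k) :: l' => if GI_eq_dec p q then (q, S k) :: l' else (q, k) :: ins p l'
  end.

Lemma prod_ins p l : prod_pows (ins p l) = gmul p (prod_pows l).
Proof. induction l as [|[q k] l IH]; simpl.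
  - ring.
  - destruct (GI_eq_dec p q); simpl.
    + subst; ring.
    + rewrite IH; ring.
Qed.

Lemma ins_fst p l x : In x (map fst (ins p l)) -> x = p \/ In x (map fst l).
Proof. induction l as [|[q k] l IH]; simpl.
  - intros [H|[]]; auto.
  - destruct (GI_eq_dec p q); simpl.
    + intros [H|H]; auto.
    + intros [H|H]; auto. destruct (IH H); auto.
Qed.

Lemma ins_nodup p l : NoDup (map fst l) -> NoDup (map fst (ins p l)).
Proof. induction l as [|[q k] l IH]; simpl; intro H.
  - constructor; [intros []|constructor].
  - inversion H; subst. destruct (GI_eq_dec p q); simpl.
    + constructor; auto.
    + constructor; auto. intro Hi. destruct (ins_fst _ _ _ Hi); auto.
Qed.

Lemma ins_prop (Pr : GI -> Prop) p l : (forall q k, In (q, k) l -> Pr q) -> Pr p ->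
  forall q k, In (q, k) (ins p l) -> Pr q.
Proof. induction l as [|[q0 k0] l IH]; simpl; intros H Hp q k Hin.
  - destruct Hin as [E|[]]; inversion E; subst; auto.
  - destruct (GI_eq_dec p q0); simpl in Hin.
    + destruct Hin as [E|Hin]; [inversion E; subst; eauto| eauto].
    + destruct Hin as [E|Hin]; [inversion E; subst; eauto| eapply IH; eauto].
Qed.

Lemma OI_inG_aux (m : nat) : forall P, (Z.to_nat (gN P) <= m)%nat -> inOI P ->
  exists l, NoDup (map fst l) /\ (forall p k, In (p, k) l -> gprime p /\ inOI p) /\ P = prod_pows l.
Proof. induction m as [|m IH]; intros P Hm HP.
  - pose proof (gN_pos P (inO_nz P (proj1 HP))). lia.
  - destruct (classic (P = gone)) as [E|NE].
    + exists nil. split; [constructor|]. split; [intros ? ? []|]. subst; reflexivity.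
    + assert (Hu : ~ inU P) by (intro Hu; apply NE, OI_unit; auto).
      destruct (exists_prime_div _ P (le_n _) (inO_nz P (proj1 HP)) Hu) as [r [Hr Hrd]].
      assert (HrO : inO r).
      { destruct (inO_dec r) as [|Hd]; auto. exfalso. apply (div1pi_notO P); [|apply HP].
        apply (gdiv_trans _ r); auto. }
      destruct (OI_norm r HrO) as [v [r' [Hv [Hr' Er]]]].
      pose proof (gprime_assoc r v r' Hr Hv Er) as Hpr'.
      destruct Hrd as [c Hc].
      set (R := gmul v c).
      assert (EP : P = gmul r' R) by (rewrite Hc, Er; unfold R; ring).
      assert (HR : inOI R) by (apply (OI_quot r' P R); auto).
      assert (gN P = gN r' * gN R) by (rewrite EP; apply gN_mul).
      pose proof (gN_pos R (inO_nz R (proj1 HR))).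
      pose proof (gN_pos r' (proj1 Hpr')).
      assert (gN r' <> 1) by (intro E; apply (proj1 (proj2 Hpr')), N1_unit, E).
      destruct (IH R ltac:(nia) HR) as [l [Hl1 [Hl2 Hl3]]].
      exists (ins r' l). split; [apply ins_nodup; auto|]. split.
      * intros p k Hin. apply (ins_prop (fun p => gprime p /\ inOI p) r' l) with (k:=k); auto.
      * rewrite prod_ins, <- Hl3; auto.
Qed.

Lemma OI_inG P : inOI P -> inG P.
Proof. intro H. destruct (OI_inG_aux _ P (le_n _) H) as [l [H1 [H2 H3]]].
  exists 0%nat, l. split; auto. split; auto. rewrite H3 at 1. simpl. ring. Qed.

Lemma split_AB X Y : inOI X -> inOI Y -> exists A1 B1,
  gadd X (gmul gi Y) = gmul oneplusi A1 /\ gsub X (gmul gi Y) = gmul oneplusi B1 /\ inO A1 /\ inO B1.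
Proof. destruct X as [a b], Y as [c d]; unfold inOI, inO; cbn [re im].
  intros [Hab Ha] [Hcd Hc]. apply odd_ex in Hab as [m' Hm'], Hcd as [n' Hn'].
  apply mod4_ex in Ha as [k Hk], Hc as [n Hn].
  set (m := m' - 2*k). set (p := n' - 2*n).
  assert (b = 2*m) by (unfold m; lia). assert (d = 2*p) by (unfold p; lia).
  exists (mkGI (2*k+m+2*n-p+1) (m+2*n-2*k+p)), (mkGI (2*k+p+m-2*n) (m-2*n-2*k-p-1)).
  split; [|split; [|split]].
  - unfold gmul, gadd, gi, oneplusi; cbn [re im]; f_equal; lia.
  - unfold gsub, gmul, gadd, gopp, gi, oneplusi; cbn [re im]; f_equal; lia.
  - cbn [re im]. apply (ex_odd _ (m + 2*n)); lia.
  - cbn [re im]. apply (ex_odd _ (m - 2*n - 1)); lia.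
Qed.

Lemma sumsq X Y : gmul (gadd X (gmul gi Y)) (gsub X (gmul gi Y)) = gadd (gmul X X) (gmul Y Y).
Proof. gcomp. Qed.
Lemma twoX X Y : gadd (gadd X (gmul gi Y)) (gsub X (gmul gi Y)) = gmul (gofZ 2) X.
Proof. gcomp. Qed.
Lemma twoY X Y : gmul (gopp gi) (gsub (gadd X (gmul gi Y)) (gsub X (gmul gi Y))) = gmul (gofZ 2) Y.
Proof. gcomp. Qed.
Lemma eps_inv eps : (eps = 1 \/ eps = -1) ->
  gmul (gmul (gofZ eps) gi) (gmul (gofZ eps) (gopp gi)) = gone.
Proof. intros [-> | ->]; vm_compute; reflexivity. Qed.

Theorem theorem4p10 (eps : Z) (X Y Z W : GI) :
  (eps = 1 \/ eps = -1) ->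
  gadd (gmul X X) (gmul Y Y) = gmul (gmul (gofZ eps) gi) (gmul Z Z) ->
  gcd3_unit X Y Z ->
  gmul (gmul X Y) Z <> gzero ->
  inOI X -> inOI Y ->
  Z = gmul oneplusi W -> inOI W ->
  exists (t : nat) (P Q : GI),
    (t <= 3)%nat /\ inG P /\ inG Q /\
    ~ gdiv oneplusi P /\ ~ gdiv oneplusi Q /\
    no_common_prime P Q /\
    gmul oneplusi X =
      gmul (gpow gi (S t))
        (gadd (gmul P P)
              (gmul (gmul (gmul (gofZ eps) (gpow (gopp gone) t)) gi) (gmul Q Q))) /\
    gmul oneplusi Y =
      gmul (gpow gi t)
        (gsub (gmul P P)
              (gmul (gmul (gmul (gofZ eps) (gpow (gopp gone) t)) gi) (gmul Q Q))) /\
    Z = gmul oneplusi (gmul P Q).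
Proof.
  intros Heps Heq Hgcd _ HX HY HZ HW.
  destruct (split_AB X Y HX HY) as [A1 [B1 [HA [HB [HA1 HB1]]]]].
  set (m := gmul (gofZ eps) (gopp gi)).
  pose proof (eps_inv eps Heps) as Hm. fold m in Hm.
  assert (HAB : gmul A1 B1 = gmul (gmul (gofZ eps) gi) (gmul W W)).
  { apply (gcancel (gmul oneplusi oneplusi)); [intro H; vm_compute in H; discriminate|].
    transitivity (gmul (gadd X (gmul gi Y)) (gsub X (gmul gi Y))). { rewrite HA, HB; ring. }
    rewrite sumsq, Heq, HZ; ring. }
  assert (HWW : gmul W W = gmul m (gmul A1 B1)).
  { rewrite HAB. transitivity (gmul (gmul (gmul (gofZ eps) gi) m) (gmul W W)); [rewrite Hm; ring | ring]. }
  assert (key : forall d, ~ gdiv oneplusi d -> gdiv d (gadd X (gmul gi Y)) ->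
             gdiv d (gsub X (gmul gi Y)) -> gdiv d X /\ gdiv d Y).
  { intros d Hd H1 H2. split; apply odd_div2; auto.
    - rewrite <- (twoX X Y). apply gdiv_add; auto.
    - rewrite <- (twoY X Y). apply gdiv_mull, gdiv_sub; auto. }
  destruct (bezout A1 B1) as [h [s [t0 [Hh [HhA HhB]]]]].
  assert (Hhodd : ~ gdiv oneplusi h).
  { intro H. apply (div1pi_notO A1); auto. apply (gdiv_trans _ h); auto. }
  destruct (key h Hhodd) as [HhX HhY].
  { rewrite HA. apply gdiv_mull; auto. }
  { rewrite HB. apply gdiv_mull; auto. }
  destruct (bezout h W) as [k [x1 [y1 [Hk [Hkh HkW]]]]].
  assert (Hku : inU k).
  { apply Hgcd; [apply (gdiv_trans _ h); auto|apply (gdiv_trans _ h); auto|].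
    rewrite HZ. apply gdiv_mull; auto. }
  destruct (inU_inv k Hku) as [kv Hkv].
  set (x2 := gmul x1 kv). set (y2 := gmul y1 kv).
  assert (E1 : gone = gadd (gmul h x2) (gmul W y2)).
  { rewrite <- Hkv, Hk. unfold x2, y2; ring. }
  assert (Hhu : inU h).
  { apply gdiv_one_unit.
    assert (E : gone = gadd (gmul h (gmul x2 (gadd (gmul h x2) (gadd (gmul W y2) (gmul W y2)))))
                             (gmul (gmul W W) (gmul y2 y2))).
    { transitivity (gmul gone gone); [ring|]. rewrite E1. ring. }
    rewrite HWW in E. rewrite E. apply gdiv_add; [apply gdiv_mulr, gdiv_refl|].
    apply gdiv_mulr, gdiv_mull, gdiv_mulr; auto. }
  destruct (inU_inv h Hhu) as [hv Hhv].
  set (s' := gmul s hv). set (t' := gmul t0 hv).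
  assert (E2 : gone = gadd (gmul A1 s') (gmul B1 t')).
  { rewrite <- Hhv, Hh. unfold s', t'; ring. }
  destruct (bezout A1 W) as [g [x [y [Hg [HgA HgW]]]]].
  pose proof HgA as [a' Ha']. pose proof HgW as [w' Hw'].
  set (c := gadd (gmul (gmul a' a') s') (gmul (gmul (gofZ eps) gi) (gmul (gmul w' w') t'))).
  assert (Hc : A1 = gmul (gmul g g) c).
  { transitivity (gmul A1 gone); [ring|]. rewrite E2.
    transitivity (gadd (gmul (gmul A1 A1) s') (gmul (gmul A1 B1) t')); [ring|].
    rewrite HAB. rewrite Ha' at 1 2. rewrite Hw'. unfold c; ring. }
  set (d := gadd (gmul A1 (gmul x x)) (gadd (gmul W (gmul x y)) (gadd (gmul W (gmul x y))
              (gmul m (gmul B1 (gmul y y)))))).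
  assert (Hd : gmul g g = gmul A1 d).
  { rewrite Hg. transitivity (gadd (gmul A1 (gadd (gmul A1 (gmul x x)) (gadd (gmul W (gmul x y)) (gmul W (gmul x y)))))
       (gmul (gmul W W) (gmul y y))); [ring|]. rewrite HWW. unfold d; ring. }
  assert (Hcu : inU c).
  { apply (unit_of_mul c d). symmetry. apply (gcancel A1); [apply inO_nz; auto|].
    transitivity A1; [ring|]. rewrite Hc at 1. rewrite Hd. ring. }
  assert (HgO : inO g).
  { destruct (inO_dec g) as [|Hd1]; auto. exfalso. apply (div1pi_notO A1); auto.
    rewrite Hc. apply gdiv_mulr, gdiv_mulr; auto. }
  destruct (OI_norm g HgO) as [v [P [Hv [HP Eg]]]].
  set (u := gmul (gmul v v) c).
  assert (Hu : inU u) by (unfold u; apply inU_mul; auto; apply inU_mul; auto).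
  destruct (unit_pow u Hu) as [t [Ht Eu]].
  assert (HA1' : A1 = gmul (gpow gi t) (gmul P P)).
  { rewrite Hc, Eg, <- Eu. unfold u; ring. }
  set (Q := gmul v w').
  assert (HWQ : W = gmul P Q) by (rewrite Hw', Eg; unfold Q; ring).
  assert (HQ : inOI Q) by (apply (OI_quot P W Q); auto).
  assert (HP0 : P <> gzero) by (apply inO_nz, HP).
  assert (HU : gmul (gpow gi t) B1 = gmul (gmul (gofZ eps) gi) (gmul Q Q)).
  { apply (gcancel (gmul P P)).
    { intro H. apply gmul_eq0 in H. destruct H; auto. }
    transitivity (gmul A1 B1); [rewrite HA1'; ring|]. rewrite HAB, HWQ; ring. }
  assert (HA' : gadd X (gmul gi Y) = gmul (gpow gi t) (gmul oneplusi (gmul P P))).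
  { rewrite HA, HA1'; ring. }
  exists t, P, Q. split; [auto|]. split; [apply OI_inG; auto|]. split; [apply OI_inG; auto|].
  split; [intro H; apply (div1pi_notO P H), HP|].
  split; [intro H; apply (div1pi_notO Q H), HQ|].
  split.
  { intros r Hr HrP HrQ.
    assert (Hrodd : ~ gdiv oneplusi r).
    { intro H. apply (div1pi_notO P); [apply (gdiv_trans _ r); auto| apply HP]. }
    destruct (inU_inv u Hu) as [ui Hui].
    assert (HrB : gdiv r B1).
    { replace B1 with (gmul ui (gmul (gpow gi t) B1)).
      - rewrite HU. apply gdiv_mull, gdiv_mull, gdiv_mulr; auto.
      - rewrite <- Eu. transitivity (gmul (gmul u ui) B1); [ring| rewrite Hui; ring]. }
    destruct (key r Hrodd) as [HrX HrY].
    { rewrite HA'. apply gdiv_mull, gdiv_mull, gdiv_mulr; auto. }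
    { rewrite HB. apply gdiv_mull; auto. }
    apply (proj1 (proj2 Hr)). apply Hgcd; auto.
    rewrite HZ, HWQ. apply gdiv_mull, gdiv_mulr; auto. }
  split; [|split; [|rewrite HZ, HWQ; reflexivity]].
  all: clear - HA' HB HU Ht Heps.
  all: destruct t as [|[|[|[|t]]]]; try lia.
  all: destruct Heps as [-> | ->].
  all: destruct X as [x1 x2], Y as [y1 y2], P as [p1 p2], Q as [q1 q2], B1 as [b1 b2].
  all: pose proof (f_equal re HA') as E1; pose proof (f_equal im HA') as E2;
       pose proof (f_equal re HB) as E3; pose proof (f_equal im HB) as E4;
       pose proof (f_equal re HU) as E5; pose proof (f_equal im HU) as E6; clear HA' HB HU.
  all: cbn [gpow] in *.
  all: unfold gmul, gsub, gadd, gopp, gone, gi, oneplusi, gofZ in *; cbn [re im] in *.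
  all: f_equal; lia.
Qed.
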